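(* (1) The set $\{\mathbb{E}_\mathbf{I}\mid\mathbf{I}\in\mathcal{LP}_n\}$ is a complete set (i.e. summing to $1$) of central pairwise orthogonal idempotents of $bH_n(q)$. (2) For all $\mathbf{I},\mathbf{J}\in\mathcal{LP}_n$ one has $\mathbb{E}_\mathbf{I}\operatorname{E}_\mathbf{J}=\mathbb{E}_\mathbf{I}$ if $\mathbf{J}\preceq\mathbf{I}$, and $\mathbb{E}_\mathbf{I}\operatorname{E}_\mathbf{J}=0$ otherwise.
   Context: $\mathbb{S}=\mathbb{C}[q,q^{-1}]$. The tied--boxed Hecke algebra $bH_n(q)$ is the $\mathbb{S}$--algebra presented by generators $e_1,\dots,e_{n-1}$, $z_1,\dots,z_{n-1}$ and relations: $e_i^2=e_i$, $e_ie_j=e_je_i$; $z_iz_jz_i=z_jz_iz_j$ if $|i-j|=1$, $z_iz_j=z_jz_i$ if $|i-j|>1$; $e_iz_i=z_i$; $e_iz_j=z_je_i$; $z_i^2=e_i+(q-q^{-1})z_i$. $\mathcal{LP}_n$ is the set of linear set partitions of $[n]$ (all blocks intervals), ordered by $\mathbf{I}\preceq\mathbf{J}$ iff every block of $\mathbf{J}$ is a union of blocks of $\mathbf{I}$. For $\mathbf{I}\in\mathcal{LP}_n$, $\operatorname{E}_\mathbf{I}=\prod e_i$ over those $i$ with $i,i+1$ in the same block of $\mathbf{I}$. Let $|\mathbf{I}|$ be the number of blocks, $\mu(\mathbf{I},\mathbf{J})=(-1)^{|\mathbf{I}|-|\mathbf{J}|}$ if $\mathbf{I}\preceq\mathbf{J}$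 and $0$ otherwise, and $\mathbb{E}_\mathbf{I}=\sum_{\mathbf{J}\in\mathcal{LP}_n,\ \mathbf{J}\succeq\mathbf{I}}\mu(\mathbf{I},\mathbf{J})\operatorname{E}_\mathbf{J}$. *)

(* Defs.v *)
From HB Require Import structures.
From mathcomp Require Import all_boot all_order all_algebra.
From mathcomp Require Import complex.
From mathcomp Require Import Rstruct.
Set Implicit Arguments. Unset Strict Implicit. Unset Printing Implicit Defensive.
Import Order.TTheory GRing.Theory Num.Theory.
Local Open Scope ring_scope.

Definition Cplx : fieldType := (Rdefinitions.R)[i].

(* Set partitions of [n] = {1..n}, represented on 'I_n = {0..n-1}
   (ordinal k stands for the element k+1 of [n]). *)
Definition is_interval n (B : {set 'I_n}) : bool :=
  [forall x in B, forall y in B, forall z : 'I_n,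
     ((x <= z) && (z <= y))%N ==> (z \in B)].

Definition linpart n (P : {set {set 'I_n}}) : bool :=
  partition P [set: 'I_n] && [forall B in P, is_interval B].

Definition lp_le n (I J : {set {set 'I_n}}) : bool :=
  [forall B in J, exists S : {set {set 'I_n}}, (S \subset I) && (B == cover S)].

(* x and y (natural numbers in 0..n-1, i.e. elements x+1, y+1 of [n])
   lie in the same block of P *)
Definition sameblock n (P : {set {set 'I_n}}) (x y : nat) : bool :=
  [exists B in P, [exists a in B, [exists b in B,
     (nat_of_ord a == x) && (nat_of_ord b == y)]]].

(* E_I = product of e_i over those i in 1..n-1 with i, i+1 in the same block
   (i.e. ordinals i-1, i in the same block). *)
Definition EE (A : pzRingType) n (e : nat -> A) (P : {set {set 'I_n}}) : A :=
  \prod_(i < n | (0 < i)%N && sameblock P i.-1 i) e i.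

(* blackboard E_I = sum over linear J ⪰ I of mu(I,J) E_J *)
Definition EEbb (A : pzRingType) n (e : nat -> A) (I : {set {set 'I_n}}) : A :=
  \sum_(J : {set {set 'I_n}} | linpart J && lp_le I J)
     (-1) ^+ (#|I| - #|J|) * EE e J.

(* Main.v *)
Require Import Defs.
From HB Require Import structures.
From mathcomp Require Import all_boot all_order all_algebra.
From mathcomp Require Import complex.
From mathcomp Require Import Rstruct.
From mathcomp Require Import zify.
Set Implicit Arguments. Unset Strict Implicit. Unset Printing Implicit Defensive.
Import Order.TTheory GRing.Theory Num.Theory.

Section Comb.
Variable n : nat.
Implicit Types (P Q : {set {set 'I_n}}) (T S : {set 'I_n}).

Definition pos : {set 'I_n} := [set i : 'I_n | (0 < i)%N].
Definition sgp P : {set 'I_n} := [set i : 'I_n | (0 < i)%N && sameblock P i.-1 i].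
Definition Rl T : rel 'I_n := fun x y =>
  [forall k : 'I_n, ((minn x y < k) && (k <= maxn x y))%N ==> (k \in T)].
Definition mkpart T := equivalence_partition (Rl T) [set: 'I_n].

Lemma prev_lt (i : 'I_n) : (i.-1 < n)%N.
Proof. exact: leq_ltn_trans (leq_pred i) (ltn_ord i). Qed.
Definition prev (i : 'I_n) : 'I_n := Ordinal (prev_lt i).

Lemma sameblockE P (a b : 'I_n) : partition P [set: 'I_n] ->
  sameblock P a b = (b \in pblock P a).
Proof.
case/and3P=> /eqP cP tI _.
apply/existsP/idP.
- case=> B /andP[BP /existsP[a' /andP[a'B /existsP[b' /andP[b'B /andP[/eqP ea /eqP eb]]]]]].
  have -> : a = a' by apply: val_inj.
  have -> : b = b' by apply: val_inj.
  by rewrite (def_pblock tI BP a'B).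
- move=> h; exists (pblock P a); rewrite pblock_mem ?cP ?inE //=.
  apply/existsP; exists a; rewrite mem_pblock cP inE /=.
  by apply/existsP; exists b; rewrite h !eqxx.
Qed.

Lemma sig_in P (i : 'I_n) : partition P [set: 'I_n] ->
  (i \in sgp P) = (0 < i)%N && (i \in pblock P (prev i)).
Proof.
move=> hP; rewrite inE; congr (_ && _).
by rewrite -sameblockE.
Qed.

Lemma sig_pos P : sgp P \subset pos.
Proof. by apply/subsetP=> i; rewrite !inE => /andP[]. Qed.

Lemma linpart_part P : linpart P -> partition P [set: 'I_n].
Proof. by case/andP. Qed.

Lemma intervalP P B (x y z : 'I_n) : linpart P -> B \in P -> x \in B -> y \in B ->
  (minn x y <= z <= maxn x y)%N -> z \in B.
Proof.
case/andP=> _ /forallP/(_ B) hB BP xB yB.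
move: hB; rewrite BP /= => /forallP hB.
have key : forall a b : 'I_n, a \in B -> b \in B -> (a <= z <= b)%N -> z \in B.
  move=> a b aB bB hz.
  move: (hB a); rewrite aB /= => /forallP/(_ b); rewrite bB /= => /forallP/(_ z).
  by rewrite hz.
case: (leqP x y) => hxy.
  exact: key.
exact: key yB xB.
Qed.

Lemma pblock_sym P (x y : 'I_n) : partition P [set: 'I_n] ->
  (y \in pblock P x) = (x \in pblock P y).
Proof.
case/and3P=> /eqP cP tI _.
by rewrite -!eq_pblock ?cP ?inE // eq_sym.
Qed.

Lemma Rl_sym T x y : Rl T x y = Rl T y x.
Proof. by rewrite /Rl minnC maxnC. Qed.

Lemma samebP P (x y : 'I_n) : linpart P ->
  (y \in pblock P x) = Rl (sgp P) x y.
Proof.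
move=> hL; have hP := linpart_part hL; move: (hP) => /and3P[/eqP cP tI _].
have cov : forall u : 'I_n, u \in cover P by move=> u; rewrite cP inE.
apply/idP/idP.
- move=> h; apply/forallP=> k; apply/implyP=> /andP[h1 h2].
  have BP : pblock P x \in P by rewrite pblock_mem.
  have xB : x \in pblock P x by rewrite mem_pblock.
  have kB : k \in pblock P x by apply: (intervalP hL BP xB h); rewrite h2 ltnW.
  have k'B : prev k \in pblock P x.
    by apply: (intervalP hL BP xB h); rewrite /= -ltnS prednK ?(leq_ltn_trans _ h1) //; lia.
  rewrite sig_in // (leq_ltn_trans _ h1) //=.
  by rewrite (def_pblock tI BP k'B).
- wlog hxy : x y / (x <= y)%N.
    move=> W; case: (leqP x y) => h; first exact: W.
    by rewrite Rl_sym pblock_sym //; apply: W; apply: ltnW.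
  move=> /forallP H.
  suff : forall m (hm : (m < n)%N), (x <= m)%N -> (m <= y)%N -> Ordinal hm \in pblock P x.
    move/(_ y (ltn_ord y) hxy (leqnn _)); suff -> : Ordinal (ltn_ord y) = y by []; exact: val_inj.
  elim=> [|m IH] hm h1 h2.
    have -> : Ordinal hm = x by apply: val_inj => /=; lia.
    by rewrite mem_pblock.
  case: (eqVneq (x : nat) m.+1) => [ex|nx].
    have -> : Ordinal hm = x by apply: val_inj => /=; rewrite ex.
    by rewrite mem_pblock.
  have hm' : (m < n)%N by apply: ltnW.
  have h1' : (x <= m)%N by move: nx h1; rewrite eq_sym; move=> /eqP nx h1; lia.
  have := IH hm' h1' (ltnW h2) => mB.
  have BP : pblock P x \in P by rewrite pblock_mem.
  move: (H (Ordinal hm)); rewrite /= (minn_idPl hxy) (maxn_idPr hxy) h2 andbT.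
  rewrite ltnS h1' /= sig_in //= => hh.
  have ee : prev (Ordinal hm) = Ordinal hm' by apply: val_inj.
  move: hh; rewrite ee.
  by rewrite (def_pblock tI BP mB).
Qed.


Lemma Rl_refl T x : Rl T x x.
Proof. by apply/forallP=> k; apply/implyP; rewrite minnn maxnn; lia. Qed.

Lemma Rl_trans T x y z : Rl T x y -> Rl T y z -> Rl T x z.
Proof.
move=> /forallP H1 /forallP H2; apply/forallP=> k; apply/implyP=> hk.
have [h|h] : (minn x y < k <= maxn x y)%N \/ (minn y z < k <= maxn y z)%N by lia.
  by move/implyP: (H1 k); apply.
by move/implyP: (H2 k); apply.
Qed.

Lemma Rl_sub T (x y a b : 'I_n) : Rl T x y -> (minn x y <= minn a b)%N -> (maxn a b <= maxn x y)%N -> Rl T a b.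
Proof.
move=> /forallP H h1 h2; apply/forallP=> k; apply/implyP=> hk.
by move/implyP: (H k); apply; lia.
Qed.

Lemma Rl_mono T T' x y : T \subset T' -> Rl T x y -> Rl T' x y.
Proof.
move=> /subsetP sT /forallP H; apply/forallP=> k; apply/implyP=> hk.
by apply: sT; move/implyP: (H k); apply.
Qed.

Lemma Rl_equiv T : {in [set: 'I_n] & &, equivalence_rel (Rl T)}.
Proof.
move=> x y z _ _ _; split; first exact: Rl_refl.
move=> hxy; apply/idP/idP => h.
  by apply: Rl_trans h; rewrite Rl_sym.
exact: Rl_trans hxy h.
Qed.

Lemma mkpart_part T : partition (mkpart T) [set: 'I_n].
Proof. exact: equivalence_partitionP (Rl_equiv T). Qed.

Lemma mkpart_pblock T x y : (y \in pblock (mkpart T) x) = Rl T x y.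
Proof. by rewrite pblock_equivalence_partition // ?inE //; apply: Rl_equiv. Qed.

Lemma mkpart_lin T : linpart (mkpart T).
Proof.
rewrite /linpart mkpart_part /=; apply/forallP=> B; apply/implyP=> /imsetP[x _ ->].
apply/forallP=> a; apply/implyP; rewrite inE => /andP[_ ha].
apply/forallP=> b; apply/implyP; rewrite inE => /andP[_ hb].
apply/forallP=> c; apply/implyP=> hc; rewrite inE /=.
have hab : Rl T a b by apply: Rl_trans hb; rewrite Rl_sym.
rewrite inE /=; apply: (Rl_trans ha); apply: (Rl_sub hab); lia.
Qed.

Lemma sig_mkpart T : sgp (mkpart T) = T :&: pos.
Proof.
apply/setP=> i; rewrite sig_in ?mkpart_part // mkpart_pblock !inE andbC.
have [i0|hi] := posnP i; first by rewrite !andbF.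
rewrite !andbT; apply/forallP/idP.
  move=> /(_ i)/implyP; apply => /=; lia.
move=> iT k; apply/implyP => hk /=.
suff -> : k = i by [].
apply: val_inj => /=; move: hk => /=; lia.
Qed.

Lemma mkpart_sig P : linpart P -> mkpart (sgp P) = P.
Proof.
move=> hL; rewrite -{2}(equivalence_partition_pblock (linpart_part hL)).
rewrite /mkpart /equivalence_partition; apply: eq_imset => x.
by apply/setP => y; rewrite !inE samebP.
Qed.

Lemma lp_le_sig I J : linpart I -> linpart J -> lp_le I J = (sgp I \subset sgp J).
Proof.
move=> hI hJ.
have [/eqP cI tI _] := and3P (linpart_part hI).
have [/eqP cJ tJ _] := and3P (linpart_part hJ).
apply/idP/idP.
- move=> /forallP H; apply/subsetP=> i; rewrite !sig_in ?linpart_part //.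
  case/andP=> i0 hi; rewrite i0 /=.
  have BJ : pblock J (prev i) \in J by rewrite pblock_mem // cJ inE.
  move/implyP: (H (pblock J (prev i))) => /(_ BJ) /existsP[S /andP[SI /eqP eB]].
  have : prev i \in cover S by rewrite -eB mem_pblock cJ inE.
  case/bigcupP=> C CS pC.
  have CI : C \in I by apply: (subsetP SI).
  have iC : i \in C by rewrite -(def_pblock tI CI pC).
  by rewrite eB; apply/bigcupP; exists C.
- move=> sub; apply/forallP=> B; apply/implyP=> BJ.
  apply/existsP; exists [set C in I | C \subset B].
  apply/andP; split; first by apply/subsetP=> C; rewrite inE => /andP[].
  apply/eqP/setP=> x; apply/idP/idP.
  + move=> xB; apply/bigcupP; exists (pblock I x); last by rewrite mem_pblock cI inE.
    rewrite inE pblock_mem ?cI ?inE //=; apply/subsetP=> y hy.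
    rewrite samebP // in hy.
    have := Rl_mono sub hy; rewrite -samebP //.
    by rewrite (def_pblock tJ BJ xB).
  + case/bigcupP=> C; rewrite inE => /andP[_ /subsetP CB] xC; exact: CB.
Qed.

Lemma card_lin P : linpart P -> #|P| = (n - #|sgp P|)%N.
Proof.
move=> hL; have hP := linpart_part hL.
have [/eqP cP tP nP] := and3P hP.
have eP : P = [set pblock P x | x in ~: sgp P].
  apply/setP=> B; apply/idP/idP.
  - move=> BP.
    have : B != set0 by apply: contraNneq nP => <-.
    case/set0Pn=> x0 x0B.
    case: (arg_minnP (fun i : 'I_n => (i : nat)) x0B) => m mB mmin.
    apply/imsetP; exists m; last by rewrite (def_pblock tP BP mB).
    rewrite inE sig_in //; apply/negP=> /andP[m0 hm].
    have pB : prev m \in B.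
      rewrite -(def_pblock tP BP mB) pblock_sym //.
    by have := mmin _ pB; rewrite /=; lia.
  - by case/imsetP=> x _ ->; rewrite pblock_mem // cP inE.
rewrite {1}eP card_in_imset; first by have := cardsC (sgp P); rewrite card_ord; lia.
move=> x y; rewrite !inE => hx hy exy.
wlog hxy : x y hx hy exy / (x <= y)%N.
  move=> W; case: (leqP x y) => h; first exact: W.
  by apply/esym/W => //; apply: ltnW.
case: (ltngtP x y) hxy => // [lt _|eq _]; last by apply: val_inj.
have : y \in pblock P x by rewrite exy mem_pblock cP inE.
rewrite samebP // => /forallP/(_ y)/implyP.
rewrite (minn_idPl (ltnW lt)) (maxn_idPr (ltnW lt)) lt leqnn => /(_ isT) ys.
by move: ys; rewrite inE (negbTE hy).
Qed.

End Comb.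

Local Open Scope ring_scope.
Section Alg.
Variable n : nat.
Variable A : pzRingType.
Variable e : nat -> A.
Implicit Types (T U S X Y : {set 'I_n}) (j : 'I_n).
Hypothesis He2 : forall i : 'I_n, (0 < i)%N -> e i * e i = e i.
Hypothesis Hee : forall i j : 'I_n, (0 < i)%N -> (0 < j)%N -> e i * e j = e j * e i.

Definition Eprod (T : {set 'I_n}) : A := \prod_(i < n | i \in T) e i.

Lemma Eprod_mk T : Eprod T = \prod_(i < n) (if i \in T then e i else 1).
Proof. by rewrite /Eprod big_mkcond. Qed.

Lemma Eprod0 : Eprod set0 = 1.
Proof. by rewrite /Eprod big_pred0 // => i; rewrite inE. Qed.

Lemma EM T U : T \subset pos n -> U \subset pos n -> Eprod T * Eprod U = Eprod (T :|: U).
Proof.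
move=> /subsetP Tp /subsetP Up.
rewrite !Eprod_mk -prodrM_comm.
  apply: eq_bigr => i _; rewrite inE.
  case: (boolP (i \in T)) => hT; case: (boolP (i \in U)) => hU /=;
    rewrite ?mulr1 ?mul1r //.
  by apply: He2; move: (Tp _ hT); rewrite inE.
move=> i j _ _; case: (boolP (i \in T)) => hT; case: (boolP (j \in U)) => hU;
  rewrite /GRing.comm ?mulr1 ?mul1r //.
by apply: Hee; [move: (Tp _ hT) | move: (Up _ hU)]; rewrite inE.
Qed.

Lemma Ecomm T U : T \subset pos n -> U \subset pos n -> Eprod T * Eprod U = Eprod U * Eprod T.
Proof. by move=> hT hU; rewrite !EM // setUC. Qed.

Definition tog (j : 'I_n) (S : {set 'I_n}) := if j \in S then S :\ j else j |: S.

Lemma togK j : involutive (tog j).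
Proof.
move=> S; rewrite /tog; case: (boolP (j \in S)) => h.
  by rewrite setD11 setD1K.
by rewrite setU11 setU1K.
Qed.

Lemma tog_in j S : (j \in tog j S) = (j \notin S).
Proof. by rewrite /tog; case: (boolP (j \in S)) => h; rewrite ?setD11 ?setU11. Qed.

Lemma tog_mem j S k : k != j -> (k \in tog j S) = (k \in S).
Proof. by move=> hk; rewrite /tog; case: (j \in S); rewrite !inE (negbTE hk). Qed.

Lemma sub_tog j S X : j \in X -> (tog j S \subset X) = (S \subset X).
Proof.
move=> jX; apply/subsetP/subsetP=> H k hk.
  case: (eqVneq k j) => [->//|ne]; by apply: H; rewrite tog_mem.
case: (eqVneq k j) => [->//|ne]; by apply: H; rewrite -(tog_mem S ne).
Qed.

Lemma tog_sub j S Y : j \notin Y -> (Y \subset tog j S) = (Y \subset S).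
Proof.
move=> jY; apply/subsetP/subsetP=> H k hk.
  have ne : k != j by apply: contraNneq jY => <-.
  by rewrite -(tog_mem S ne); apply: H.
have ne : k != j by apply: contraNneq jY => <-.
by rewrite tog_mem //; apply: H.
Qed.

Lemma sgn_tog j S : (-1) ^+ #|tog j S| = - (-1) ^+ #|S| :> A.
Proof.
rewrite /tog; case: (boolP (j \in S)) => h.
  by rewrite [in RHS](cardsD1 j S) h add1n exprS mulN1r opprK.
by rewrite cardsU1 h add1n exprS mulN1r.
Qed.

Lemma invol0 (V : zmodType) j (Pr : pred {set 'I_n}) (G : {set 'I_n} -> V) :
  (forall S, Pr (tog j S) = Pr S) -> (forall S, Pr S -> G (tog j S) = - G S) ->
  \sum_(S | Pr S) G S = 0.
Proof.
move=> HP HG.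
rewrite (bigID (fun S => j \in S)) /=.
rewrite (reindex_inj (inv_inj (togK j))) /=.
rewrite (eq_big (fun S => Pr S && (j \notin S)) (fun S => - G S)); last first.
- by move=> S; rewrite HP => /andP[hS _]; apply: HG.
- by move=> S; rewrite HP tog_in.
by rewrite sumrN addNr.
Qed.

Lemma sgnB (a b : nat) : (b <= a)%N -> (-1) ^+ (a - b) = (-1) ^+ (a + b) :> A.
Proof. by move=> h; rewrite -signr_odd oddB // -[RHS]signr_odd oddD. Qed.

Lemma sgn2 (a : nat) : (-1) ^+ (a + a) = 1 :> A.
Proof. by rewrite -signr_odd oddD addbb. Qed.

Definition Phi (S : {set 'I_n}) : A :=
  \sum_(T : {set 'I_n} | (T \subset pos n) && (S \subset T)) (-1) ^+ (#|T| + #|S|) * Eprod T.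

Lemma PhiE S U : S \subset pos n -> U \subset pos n ->
  Phi S * Eprod U = if U \subset S then Phi S else 0.
Proof.
move=> Sp Up; rewrite /Phi mulr_suml; case: ifP => US.
  apply: eq_bigr => T /andP[Tp ST]; rewrite -mulrA EM //.
  by congr (_ * Eprod _); apply/setUidPl; apply: subset_trans ST.
have /subsetPn [j jU jS] := negbT US.
have jp : j \in pos n by apply: (subsetP Up).
apply: (@invol0 A j).
  by move=> T; rewrite sub_tog // tog_sub.
move=> T /andP[Tp ST].
have Tp' : tog j T \subset pos n by rewrite sub_tog.
rewrite -!mulrA !EM //.
have -> : tog j T :|: U = T :|: U.
  apply/setP=> k; rewrite !inE.
  case: (eqVneq k j) => [->|ne]; first by rewrite jU !orbT.
  by rewrite tog_mem.
by rewrite exprD sgn_tog exprD !mulNr.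
Qed.

Lemma Phi_comm S U : U \subset pos n -> Phi S * Eprod U = Eprod U * Phi S.
Proof.
move=> Up; rewrite /Phi mulr_suml mulr_sumr; apply: eq_bigr => T /andP[Tp _].
by rewrite -mulrA Ecomm // mulrA -(commr_sign (Eprod U)) -mulrA.
Qed.

Lemma PhiPhi_comm S S' : Phi S * Phi S' = Phi S' * Phi S.
Proof.
have := Phi_comm S; move: (Phi S) => x hx.
rewrite /Phi mulr_suml mulr_sumr; apply: eq_bigr => T /andP[Tp _].
by rewrite mulrA (commr_sign x) -!mulrA hx.
Qed.

Lemma PhiPhi0 S S' : S \subset pos n -> ~~ (S' \subset S) -> Phi S * Phi S' = 0.
Proof.
move=> Sp nS; rewrite {2}/Phi mulr_sumr big1 // => T /andP[Tp S'T].
rewrite mulrA (commr_sign (Phi S)) -mulrA PhiE // ifF ?mulr0 //.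
by apply: contraNF nS => TS; apply: subset_trans TS.
Qed.

Lemma PhiPhi S S' : S \subset pos n -> S' \subset pos n ->
  Phi S * Phi S' = if S == S' then Phi S else 0.
Proof.
move=> Sp S'p; case: (boolP (S' \subset S)) => h1; last first.
  by rewrite PhiPhi0 // ifF //; apply: contraNF h1 => /eqP ->.
case: (boolP (S \subset S')) => h2; last first.
  by rewrite PhiPhi_comm PhiPhi0 // ifF //; apply: contraNF h2 => /eqP ->.
have eS : S' = S by apply/eqP; rewrite eqEsubset h1 h2.
subst S'; rewrite eqxx {2}/Phi mulr_sumr (bigD1 S) /=; last by rewrite Sp subxx.
rewrite big1 ?addr0.
  by rewrite mulrA (commr_sign (Phi S)) -mulrA PhiE // subxx sgn2 mul1r.
move=> T /andP[/andP[Tp ST] nT].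
rewrite mulrA (commr_sign (Phi S)) -mulrA PhiE // ifF ?mulr0 //.
by apply: contraNF nT => TS; rewrite eqEsubset TS ST.
Qed.

Lemma Phisum : \sum_(S : {set 'I_n} | S \subset pos n) Phi S = 1.
Proof.
rewrite /Phi (exchange_big_dep (fun T : {set 'I_n} => T \subset pos n)) /=; last first.
  by move=> S T _ /andP[].
rewrite (bigD1 set0) ?sub0set //=.
rewrite (big_pred1 set0) => [|S]; last first.
  by rewrite /= subset0 andbC; case: (boolP (S == set0)) => // /eqP ->; rewrite sub0set.
rewrite cards0 addn0 expr0 mul1r Eprod0 big1 ?addr0 // => T /andP[Tp nT].
have /set0Pn [j jT] := nT.
have jp : j \in pos n by apply: (subsetP Tp).
apply: (@invol0 A j).
  by move=> S; rewrite !sub_tog.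
by move=> S _; rewrite !exprD sgn_tog mulrN mulNr.
Qed.

End Alg.

Unset Implicit Arguments.

Theorem proposition5p8 (n : nat) (A : algType Cplx) (q qi : A)
  (e z : nat -> A)
  (Hqi : q * qi = 1 /\ qi * q = 1)
  (Hqc : forall x : A, q * x = x * q)
  (He2 : forall i, (0 < i < n)%N -> e i * e i = e i)
  (Hee : forall i j, (0 < i < n)%N -> (0 < j < n)%N -> e i * e j = e j * e i)
  (Hbr : forall i j, (0 < i < n)%N -> (0 < j < n)%N ->
           (i == j.+1)%N || (j == i.+1)%N -> z i * z j * z i = z j * z i * z j)
  (Hzc : forall i j, (0 < i < n)%N -> (0 < j < n)%N ->
           (i.+1 < j)%N || (j.+1 < i)%N -> z i * z j = z j * z i)
  (Hez : forall i, (0 < i < n)%N -> e i * z i = z i)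
  (Hezc : forall i j, (0 < i < n)%N -> (0 < j < n)%N -> e i * z j = z j * e i)
  (Hquad : forall i, (0 < i < n)%N -> z i * z i = e i + (q - qi) * z i) :
  (* (1) complete set of central pairwise orthogonal idempotents *)
  ((forall I : {set {set 'I_n}}, linpart I -> EEbb e I * EEbb e I = EEbb e I)
   /\ (forall I J : {set {set 'I_n}}, linpart I -> linpart J -> I != J ->
         EEbb e I * EEbb e J = 0)
   /\ (forall I : {set {set 'I_n}}, linpart I -> forall i, (0 < i < n)%N ->
         EEbb e I * e i = e i * EEbb e I /\ EEbb e I * z i = z i * EEbb e I)
   /\ \sum_(I : {set {set 'I_n}} | linpart I) EEbb e I = 1)
  /\
  (* (2) *)
  (forall I J : {set {set 'I_n}}, linpart I -> linpart J ->
     EEbb e I * EE e J = (if lp_le J I then EEbb e I else 0)).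
Proof.
have hpos : forall i : 'I_n, (0 < i)%N -> (0 < i < n)%N by move=> i hi; rewrite hi ltn_ord.
have He2' : forall i : 'I_n, (0 < i)%N -> e i * e i = e i.
  by move=> i hi; apply: He2; apply: hpos.
have Hee' : forall i j : 'I_n, (0 < i)%N -> (0 < j)%N -> e i * e j = e j * e i.
  by move=> i j hi hj; apply: Hee; apply: hpos.
have EE_E : forall P : {set {set 'I_n}}, EE e P = Eprod e (sgp P).
  by move=> P; rewrite /EE /Eprod; apply: eq_bigl => i; rewrite inE.
have TPE : forall T : {set 'I_n}, (T :&: pos n == T) = (T \subset pos n).
  move=> T; case: (boolP (T \subset pos n)) => hT; first by rewrite (setIidPl hT) eqxx.
  by apply/negbTE; apply: contra hT => /eqP <-; apply: subsetIr.
have Phi_def : forall I : {set {set 'I_n}}, linpart I -> EEbb e I = Phi e (sgp I).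
  move=> I hI; rewrite /EEbb.
  rewrite (eq_bigr (fun J => (-1) ^+ (#|sgp J| + #|sgp I|) * Eprod e (sgp J))); last first.
    move=> J /andP[hJ le]; rewrite EE_E !card_lin //.
    have sub : sgp I \subset sgp J by rewrite -lp_le_sig.
    have h1 := subset_leq_card sub.
    have h2 : (#|sgp J| <= n)%N by rewrite -[n in (_ <= n)%N]card_ord max_card.
    rewrite -sgnB //; congr (_ ^+ _ * _); lia.
  rewrite (reindex_onto (@mkpart n) (@sgp n)) /=; last first.
    by move=> J /andP[hJ _]; apply: mkpart_sig.
  apply: eq_big => [T|T /andP[_ /eqP eT]]; last by rewrite eT.
  rewrite mkpart_lin lp_le_sig ?mkpart_lin // sig_mkpart /= TPE.
  case: (boolP (T \subset pos n)) => hT; last by rewrite andbF.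
  by rewrite (setIidPl hT) andbT.
split; [split; [|split; [|split]] |].
- by move=> I hI; rewrite Phi_def // (PhiPhi He2' Hee') ?sig_pos // eqxx.
- move=> I J hI hJ nIJ; rewrite !Phi_def // (PhiPhi He2' Hee') ?sig_pos // ifF //.
  apply: contraNF nIJ => /eqP eS.
  by rewrite -(mkpart_sig hI) -(mkpart_sig hJ) eS.
- move=> I hI i hi; rewrite Phi_def //; split.
  + apply/esym; rewrite /Phi; apply: commr_sum => T /andP[Tp _].
    apply: commrM; first exact: commr_sign.
    apply: commr_prod => j hj; rewrite /GRing.comm.
    have : j \in pos n by apply: (subsetP Tp).
    rewrite inE => j0; exact: Hee hi (hpos j j0).
  + apply/esym; rewrite /Phi; apply: commr_sum => T /andP[Tp _].
    apply: commrM; first exact: commr_sign.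
    apply: commr_prod => j hj; rewrite /GRing.comm.
    have : j \in pos n by apply: (subsetP Tp).
    rewrite inE => j0; apply/esym; exact: Hezc (hpos j j0) hi.
- rewrite (eq_bigr (fun I => Phi e (sgp I))); last by move=> I; apply: Phi_def.
  rewrite (reindex_onto (@mkpart n) (@sgp n)) /=; last by move=> J hJ; apply: mkpart_sig.
  rewrite -(Phisum n e); apply: eq_big => [T|T /andP[_ /eqP eT]]; last by rewrite eT.
  by rewrite mkpart_lin sig_mkpart /= TPE.
- move=> I J hI hJ; rewrite Phi_def // EE_E (PhiE He2' Hee') ?sig_pos //.
  by rewrite lp_le_sig.
Qed.
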